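(* Let $M/K$ be a finite extension of fields and $G$ a finite group. Then the following are equivalent: (a) there is a central division $K$-algebra $D_0$ which has a maximal subfield $L_0$ that is a $G$-extension of $K$, such that $D=D_0\otimes_K M$ is a division algebra which has a maximal subfield $L$ that is a $G$-extension of $M$ (no relation between $L$ and $L_0$ being assumed); (b) condition (6) holds: there is a central division algebra $D_0$ over $K$ with a maximal subfield $L_0$ which is a $G$-extension of $K$, such that $L_0\cap M=K$, $D=D_0\otimes_K M$ is a division algebra, and $L_0M$ is a maximal subfield of $D$.
   Context: For a field $F$ and finite group $G$, a $G$-extension of $F$ is a Galois extension $L/F$ with $\mathrm{Gal}(L/F)\cong G$. A maximal subfield of a central division algebra of index $n$ over $F$ is a subfield of degree $n$ over $F$. *)

(* Defs.v *)
From HB Require Import structures.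
From mathcomp Require Import all_boot all_order all_algebra all_fingroup all_solvable all_field.
Set Implicit Arguments. Unset Strict Implicit. Unset Printing Implicit Defensive.
Import GRing.Theory.
Local Open Scope ring_scope.

Definition is_division_alg (K : fieldType) (D : falgType K) : Prop :=
  forall x : D, x != 0 -> x \is a GRing.unit.

Definition is_central_division_alg (K : fieldType) (D : falgType K) : Prop :=
  ('Z({:D})%VS == 1%VS) /\ is_division_alg D.

Definition is_G_extension (K : fieldType) (L : splittingFieldType K)
    (G : finGroupType) : Prop :=
  galois 1%VS {:L}%VS /\ ('Gal({:L}%VS / 1%VS) \isog [set: G])%g.

(* The field L, embedded in D by the K-algebra morphism iota, is a maximal
   subfield of D, i.e. [L:K] = index of D, (index)^2 = dim_K D. *)
Definition is_maximal_subfield (K : fieldType) (L : fieldExtType K)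
    (D : falgType K) (iota : {lrmorphism L -> D}) : Prop :=
  ((\dim {:L}%VS) ^ 2)%N = \dim {:D}%VS.

(* D (an M-algebra) together with phi : D0 -> D is the scalar extension
   D0 (x)_K M: phi is a K-linear ring morphism carrying a K-basis of D0 to
   an M-basis of D (so the induced map D0 (x)_K M -> D is an isomorphism
   of M-algebras). *)
Definition is_scalar_extension (K : fieldType) (M : fieldExtType K)
    (D0 : falgType K) (D : falgType M) (phi : {rmorphism D0 -> D}) : Prop :=
  (forall (k : K) (x : D0), phi (k *: x) = (k%:A : M) *: phi x) /\
  basis_of {:D}%VS (map phi (vbasis {:D0}%VS)).

(* Main.v *)
Require Import Defs.
From HB Require Import structures.
From mathcomp Require Import all_boot all_order all_algebra all_fingroup all_solvable all_field.
Set Warnings "-all".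
Set Implicit Arguments. Unset Strict Implicit. Unset Printing Implicit Defensive.
Import GRing.Theory.
Local Open Scope ring_scope.
Section CF.
Variables (F : fieldType) (A : falgType F) (E : {aspace A}).
Definition CF of {in E &, forall u v : A, u * v = v * u} & is_division_alg A : Type
  := subvs_of E.
Variables (Ec : {in E &, forall u v : A, u * v = v * u}) (Ad : is_division_alg A).
Local Notation T := (CF Ec Ad).
HB.instance Definition _ := Falgebra.on T.
Fact CF_mulC : @commutative T T *%R.
Proof. by move=> x y; apply/val_inj/Ec; apply: subvsP. Qed.
HB.instance Definition _ := GRing.PzRing_hasCommutativeMul.Build T CF_mulC.
Fact CF_field : GRing.field_axiom T.
Proof.
move=> x nz; apply: vsval_unitr; apply: Ad.
by apply: contra nz => /eqP h; apply/eqP; apply: val_inj; exact: h.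
Qed.
HB.instance Definition _ := GRing.ComUnitRing_isField.Build T CF_field.
End CF.
Section Comp.
Variables (K : fieldType) (M : fieldExtType K) (D0 : falgType K) (L0 : fieldExtType K)
  (iota0 : {lrmorphism L0 -> D0}) (D : falgType M) (phi : {rmorphism D0 -> D}).
Hypothesis phiK : forall (k : K) (x : D0), phi (k *: x) = (k%:A : M) *: phi x.
Hypothesis phiB : basis_of {:D}%VS (map phi (vbasis {:D0}%VS)).

Let b := vbasis {:D0}%VS.
Let N := \dim {:D0}%VS.

Lemma phi_coord (x : D0) :
  phi x = \sum_(i < N) (coord b i x)%:A *: phi b`_i.
Proof.
rewrite {1}(coord_vbasis (memvf x)) rmorph_sum; apply: eq_bigr => i _.
by rewrite phiK.
Qed.

Lemma phi_indep q (r : q.-tuple M) (w : 'I_q -> D0) :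
  free r -> \sum_(l < q) r`_l *: phi (w l) = 0 -> forall l, w l = 0.
Proof.
move=> fr H.
have fb : free (map_tuple phi b) by exact: (basis_free phiB).
have H2 : \sum_(i < N) (\sum_(l < q) coord b i (w l) *: r`_l) *: (map_tuple phi b)`_i = 0.
  rewrite -{}[RHS]H.
  transitivity (\sum_(l < q) \sum_(i < N) (r`_l * (coord b i (w l))%:A) *: phi b`_i).
    rewrite exchange_big /=; apply: eq_bigr => i _.
    rewrite scaler_suml (nth_map 0) ?size_tuple //; apply: eq_bigr => l _.
    by rewrite mulr_algr.
  apply: eq_bigr => l _; rewrite (phi_coord (w l)) scaler_sumr.
  by apply: eq_bigr => i _; rewrite scalerA.
have /freeP H3 := fb; have {}H3 := H3 _ H2.
move=> l; rewrite (coord_vbasis (memvf (w l))).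
apply: big1 => i _.
move/freeP: fr => fr.
have := fr (fun l => coord b i (w l)) (H3 i) l.
by move=> ->; rewrite scale0r.
Qed.

Lemma phi_free (s : seq D0) : free s -> free (map phi s).
Proof.
move=> fs; have fs' : free (in_tuple s) by [].
suff : free (map_tuple phi (in_tuple s)) by [].
apply/freeP => m Hm j.
set n := size s in m Hm j *.
pose e := vbasis {:M}%VS.
pose a (j : 'I_n) l := coord e l (m j).
pose w l := \sum_(j < n) a j l *: s`_j.
have Hw : forall l, w l = 0.
  apply: (phi_indep (basis_free (vbasisP _))) => //.
  rewrite -{}[RHS]Hm.
  transitivity (\sum_(l < \dim {:M}%VS) \sum_(k < n) (e`_l * (a k l)%:A) *: phi s`_k).
    apply: eq_bigr => l _; rewrite /w rmorph_sum scaler_sumr.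
    by apply: eq_bigr => k _; rewrite phiK scalerA.
  rewrite exchange_big /=; apply: eq_bigr => k _.
  rewrite (nth_map 0) ?size_tuple // -scaler_suml; congr (_ *: _).
  rewrite [RHS](coord_vbasis (memvf (m k))); apply: eq_bigr => l _.
  by rewrite mulr_algr.
have Ha : forall j l, a j l = 0.
  move=> k l; move/freeP: fs' => fs'.
  exact: (fs' (fun k => a k l) (Hw l) k).
rewrite (coord_vbasis (memvf (m j))); apply: big1 => l _.
by rewrite -/e -/(a j l) Ha scale0r.
Qed.

Lemma iota0_free (s : seq L0) : free s -> free (map iota0 s).
Proof.
move=> fs; have fs' : free (in_tuple s) by [].
suff : free (map_tuple iota0 (in_tuple s)) by [].
apply/freeP => m Hm j.
move/freeP: fs' => fs'; apply: fs' => //.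
apply: (fmorph_inj iota0); rewrite rmorph0 raddf_sum /= -{}[RHS]Hm.
apply: eq_bigr => i _; rewrite linearZ /= (nth_map 0) // size_tuple.
Qed.

Definition fL (x : L0) : D := phi (iota0 x).

Lemma fL_free (s : seq L0) : free s -> free (map fL s).
Proof. by move=> fs; rewrite (map_comp phi iota0); apply/phi_free/iota0_free. Qed.

Lemma fLZ (k : K) x : fL (k *: x) = (k%:A : M) *: fL x.
Proof. by rewrite /fL linearZ /= phiK. Qed.
Lemma fLD x y : fL (x + y) = fL x + fL y.
Proof. by rewrite /fL !rmorphD. Qed.
Lemma fLB x y : fL (x - y) = fL x - fL y.
Proof. by rewrite /fL !rmorphB. Qed.
Lemma fLM x y : fL (x * y) = fL x * fL y.
Proof. by rewrite /fL !rmorphM. Qed.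
Lemma fL1 : fL 1 = 1.
Proof. by rewrite /fL !rmorph1. Qed.

Let b0 := vbasis {:L0}%VS.
Let n0 := \dim {:L0}%VS.
Definition Ec := <<map fL b0>>%VS.

Lemma fL_coord x : fL x = \sum_(i < n0) (coord b0 i x)%:A *: fL b0`_i.
Proof.
rewrite {1}(coord_vbasis (memvf x)) -/b0 -/n0 /fL raddf_sum raddf_sum; apply: eq_bigr => i _.
by rewrite -/(fL _) -fLZ.
Qed.

Lemma memE x : fL x \in Ec.
Proof.
rewrite fL_coord; apply: memv_suml => i _; apply: memvZ.
by apply: memv_span; apply: map_f; apply: mem_nth; rewrite size_tuple.
Qed.

Lemma E_free : free (map fL b0).
Proof. exact/fL_free/(basis_free (vbasisP _)). Qed.

Lemma dimE : \dim Ec = n0.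
Proof. by rewrite /Ec (eqnP E_free) size_map size_tuple. Qed.

Lemma E_coord u : u \in Ec -> u = \sum_(i < n0) coord (map_tuple fL b0) i u *: fL b0`_i.
Proof.
move=> Hu; rewrite {1}(@coord_span _ _ _ (map_tuple fL b0) u Hu).
by apply: eq_bigr => i _; rewrite (nth_map 0) ?size_tuple.
Qed.

Lemma E_mul u v : u \in Ec -> v \in Ec -> u * v \in Ec.
Proof.
move=> /E_coord -> /E_coord ->; rewrite mulr_suml; apply: memv_suml => i _.
rewrite mulr_sumr; apply: memv_suml => j _.
by rewrite -scalerAl -scalerAr -fLM; apply/memvZ/memvZ/memE.
Qed.

Lemma fL_comm x v : v \in Ec -> fL x * v = v * fL x.
Proof.
move=> /E_coord ->; rewrite mulr_suml mulr_sumr; apply: eq_bigr => j _.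
by rewrite -scalerAl -scalerAr -!fLM mulrC.
Qed.

Lemma E_comm : {in Ec &, forall u v : D, u * v = v * u}.
Proof.
move=> u v /E_coord -> Hv; rewrite mulr_suml mulr_sumr; apply: eq_bigr => j _.
by rewrite -scalerAl -scalerAr fL_comm.
Qed.

Lemma E_is_aspace : is_aspace Ec.
Proof.
rewrite /is_aspace has_algid1; last by rewrite -fL1 memE.
by apply/prodvP => u v; apply: E_mul.
Qed.

Lemma dimD : \dim {:D}%VS = \dim {:D0}%VS.
Proof.
by rewrite -(span_basis phiB) (eqnP (basis_free phiB)) size_map size_tuple.
Qed.

Section DirA.
Hypothesis Dd : is_division_alg D.
Definition EA : {aspace D} := ASpace E_is_aspace.
Definition EA_comm : {in EA &, forall u v : D, u * v = v * u} := E_comm.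
Definition Omega := baseFieldType (CF EA_comm Dd).
Definition sfun (x : L0) : Omega := (Subvs (memE x) : subvs_of EA).
Lemma memE1 (y : M) : y%:A \in EA.
Proof. by rewrite /= -fL1; apply/memvZ/memE. Qed.
Definition tfun (y : M) : Omega := (Subvs (memE1 y) : subvs_of EA).

Lemma algidEA : algid EA = 1.
Proof. by apply/eqP; rewrite algid_eq1 /= -fL1 memE. Qed.

Fact sfun_add : zmod_morphism sfun.
Proof. by move=> x y; apply/val_inj; rewrite /= /fL !rmorphB. Qed.
HB.instance Definition _ := GRing.isZmodMorphism.Build L0 Omega sfun sfun_add.
Fact sfun_mul : monoid_morphism sfun.
Proof.
split; first by apply/val_inj; rewrite /= fL1 algidEA.
by move=> x y; apply/val_inj; rewrite /= fLM.
Qed.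
HB.instance Definition _ := GRing.isMonoidMorphism.Build L0 Omega sfun sfun_mul.
Fact sfun_scale : scalable sfun.
Proof. by move=> k x; apply/val_inj; rewrite /= fLZ. Qed.
HB.instance Definition _ := GRing.isScalable.Build K L0 Omega *:%R sfun sfun_scale.

Fact tfun_add : zmod_morphism tfun.
Proof. by move=> x y; apply/val_inj; rewrite /= scalerBl. Qed.
HB.instance Definition _ := GRing.isZmodMorphism.Build M Omega tfun tfun_add.
Fact tfun_mul : monoid_morphism tfun.
Proof.
split; first by apply/val_inj; rewrite /= algidEA scale1r.
by move=> x y; apply/val_inj; rewrite /= -scalerAl mul1r scalerA.
Qed.
HB.instance Definition _ := GRing.isMonoidMorphism.Build M Omega tfun tfun_mul.
Fact tfun_scale : scalable tfun.
Proof. by move=> k x; apply/val_inj; rewrite /= scalerA mulr_algl. Qed.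
HB.instance Definition _ := GRing.isScalable.Build K M Omega *:%R tfun tfun_scale.

Lemma dirA_inter : exists (Om : fieldExtType K) (s : {lrmorphism L0 -> Om})
                 (t : {lrmorphism M -> Om}),
            forall (x : L0) (y : M), s x = t y -> x \in 1%VS.
Proof.
exists Omega, sfun, tfun => x y /(congr1 val) /= Hxy.
apply: contraT => Hx.
have fr : free [:: x; 1].
  by rewrite free_cons span_seq1 Hx seq1_free oner_neq0.
have := fL_free fr; rewrite /= free_cons => /andP[/negP []].
by rewrite span_seq1 Hxy fL1; apply: memvZ; rewrite memv_line.
Qed.
End DirA.
End Comp.
Section GalPart.
Variables (K : fieldType) (M : fieldExtType K) (D0 : falgType K) (L0 : splittingFieldType K)
  (iota0 : {lrmorphism L0 -> D0}) (D : falgType M) (phi : {rmorphism D0 -> D}).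
Hypothesis phiK : forall (k : K) (x : D0), phi (k *: x) = (k%:A : M) *: phi x.
Hypothesis Dd : is_division_alg D.

Definition SE of basis_of {:D}%VS (map phi (vbasis {:D0}%VS)) & galois 1%VS {:L0}%VS : Type :=
  CF (@EA_comm _ _ _ _ iota0 _ _ phiK) Dd.
Hypothesis phiB : basis_of {:D}%VS (map phi (vbasis {:D0}%VS)).
Hypothesis galL0 : galois 1%VS {:L0}%VS.
Local Notation LE := (SE phiB galL0).
HB.instance Definition _ := GRing.Field.on LE.
HB.instance Definition _ := Falgebra.on LE.
Check (LE : fieldExtType M).

Local Notation fL := (fL iota0 phi).
Local Notation EA := (EA iota0 phiK).

Definition gE (x : L0) : LE := (Subvs (memE iota0 phiK x) : subvs_of EA).

Lemma algidEA' : algid EA = 1.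
Proof. by apply/eqP; rewrite algid_eq1 /= -(fL1 iota0 phi) memE. Qed.

Fact gE_add : zmod_morphism gE.
Proof. by move=> x y; apply/val_inj; rewrite /= fLB. Qed.
HB.instance Definition _ := GRing.isZmodMorphism.Build L0 LE gE gE_add.
Fact gE_mul : monoid_morphism gE.
Proof.
split; first by apply/val_inj; rewrite /= fL1 algidEA'.
by move=> x y; apply/val_inj; rewrite /= fLM.
Qed.
HB.instance Definition _ := GRing.isMonoidMorphism.Build L0 LE gE gE_mul.

Lemma gEZ (k : K) x : gE (k *: x) = (k%:A : M) *: gE x.
Proof. by apply/val_inj; rewrite /= fLZ. Qed.

Let b0 := vbasis {:L0}%VS.
Let n0 := \dim {:L0}%VS.

Lemma gE_coord x : gE x = \sum_(i < n0) (coord b0 i x)%:A *: gE b0`_i.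
Proof.
rewrite {1}(coord_vbasis (memvf x)) raddf_sum; apply: eq_bigr => i _.
exact: gEZ.
Qed.

Lemma LE_span (w : LE) :
  w = \sum_(i < n0) coord (map_tuple fL b0) i (val w) *: gE b0`_i.
Proof.
apply/val_inj; rewrite {1}(E_coord (valP w)) raddf_sum /=; apply: eq_bigr => i _.
by [].
Qed.

Lemma gb_free : free (map gE b0).
Proof.
have fE := E_free iota0 phiK phiB.
suff : free (map_tuple gE b0) by [].
apply/freeP => m Hm j.
have fE' : free (map_tuple fL b0) by [].
move/freeP: fE' => fE'; apply: fE' => //.
transitivity (vsval (\sum_i m i *: (map_tuple gE b0)`_i)); last by rewrite Hm.
rewrite raddf_sum; apply: eq_bigr => i _; rewrite !(nth_map 0) ?size_tuple //.
Qed.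

Lemma gb_basis : basis_of {:LE}%VS (map gE b0).
Proof.
rewrite /basis_of gb_free andbT eqEsubv subvf /=.
apply/subvP => w _; rewrite (LE_span w); apply: memv_suml => i _; apply: memvZ.
by apply: memv_span; apply: map_f; apply: mem_nth; rewrite size_tuple.
Qed.

Lemma dimLE : \dim {:LE}%VS = n0.
Proof.
by rewrite -(span_basis gb_basis) (eqnP gb_free) size_map size_tuple.
Qed.

Lemma basis_ext (f g : 'End(LE)) : (forall x : L0, f (gE x) = g (gE x)) -> f =1 g.
Proof.
move=> H w; rewrite (LE_span w) !linear_sum; apply: eq_bigr => i _.
by rewrite !linearZ /= H.
Qed.

Lemma LE_split : splitting_field_axiom LE.
Proof.
move/(galois_factors (sub1v {:L0}%VS)): galL0 => HF.
have /fin_all_exists [r Hr] : forall i : 'I_n0,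
    exists r : seq L0, minPoly 1 b0`_i = \prod_(c <- r) ('X - c%:P).
  move=> i; have [rr [_ _ ->]] := HF _ (memvf b0`_i).
  by exists [seq (x : gal_of _) b0`_i | x <- rr].
pose rs := flatten [seq map gE (r i) | i <- enum 'I_n0].
have Hp : \prod_(i < n0) map_poly gE (minPoly 1 b0`_i) = \prod_(z <- rs) ('X - z%:P).
  rewrite big_flatten /= big_map big_enum /=; apply: eq_bigr => i _.
  by rewrite Hr rmorph_prod big_map; apply: eq_bigr => c _; exact: map_polyXsubC.
exists (\prod_(i < n0) map_poly gE (minPoly 1 b0`_i)).
  apply: rpred_prod => i _; apply/polyOverP => j; rewrite coef_map.
  have /vlineP [k ->] := polyOverP (minPolyOver 1 b0`_i) j.
  change (gE (k *: 1) \in 1%VS); by rewrite gEZ rmorph1; apply/memvZ/mem1v.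
exists rs; first by rewrite Hp eqpxx.
apply/eqP; rewrite eqEsubv subvf /= -(span_basis gb_basis).
apply/span_subvP => _ /mapP [x /(nthP 0) [i Hi <-] ->].
have Hi' : (i < n0)%N by rewrite (leq_trans Hi) // size_tuple.
apply: seqv_sub_adjoin; apply/flattenP.
exists (map gE (r (Ordinal Hi'))); first by apply: map_f; rewrite mem_enum.
have := rmorph_root gE (root_minPoly 1 b0`_(Ordinal Hi')).
rewrite Hr rmorph_prod (eq_bigr (fun c => 'X - (gE c)%:P)); last first.
  by move=> c _; exact: map_polyXsubC.
by rewrite -(big_map gE xpredT (fun z => 'X - z%:P)) root_prod_XsubC.
Qed.

HB.instance Definition _ := FieldExt_isSplittingField.Build M LE LE_split.
Check (LE : splittingFieldType M).

Section Tsig.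
Variable sig : gal_of (fullv : {vspace L0}).

Definition Tlin := sval (linear_of_free (map gE b0) (map (fun x => gE (sig x)) b0)).
Definition T : 'End(LE) := linfun Tlin.

Lemma T_basis i : (i < n0)%N -> T (gE b0`_i) = gE (sig b0`_i).
Proof.
move=> Hi; rewrite lfunE /= /Tlin; case: linear_of_free => f /= Hf.
have := Hf gb_free; rewrite !size_map => /(_ erefl) Hm.
have := congr1 (fun s => nth 0 s i) Hm.
by rewrite !(nth_map 0) ?size_tuple.
Qed.

Lemma T_gE x : T (gE x) = gE (sig x).
Proof.
rewrite gE_coord linear_sum {2}(coord_vbasis (memvf x)) linear_sum raddf_sum.
apply: eq_bigr => i _; rewrite linearZ /= T_basis ?size_tuple //.
by rewrite linearZ /= gEZ.
Qed.

Lemma T_mul_gE x v : T (gE x * v) = T (gE x) * T v.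
Proof.
rewrite (LE_span v) mulr_sumr !linear_sum mulr_sumr; apply: eq_bigr => i _.
by rewrite -scalerAr !linearZ /= -scalerAr -rmorphM !T_gE rmorphM rmorphM.
Qed.

Lemma T_mul u v : T (u * v) = T u * T v.
Proof.
rewrite (LE_span u) mulr_suml !linear_sum mulr_suml; apply: eq_bigr => i _.
by rewrite -scalerAl !linearZ /= -scalerAl T_mul_gE.
Qed.

Lemma T_aut : kAut 1 {:LE}%VS T.
Proof.
rewrite kAutfE; apply/kHom_monoid_morphism.
have T1 : T 1 = 1 by rewrite -(rmorph1 gE) T_gE !rmorph1.
exact: (T1, T_mul).
Qed.

Definition Phi : gal_of (fullv : {vspace LE}) := s2val (kAut_to_gal T_aut).
Lemma Phi_gal : Phi \in 'Gal({:LE}%VS / 1%VS)%g.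
Proof. by rewrite /Phi; case: kAut_to_gal. Qed.
Lemma Phi_gE x : Phi (gE x) = gE (sig x).
Proof.
rewrite /Phi; case: kAut_to_gal => g /= _ Hg.
by rewrite -Hg ?memvf // T_gE.
Qed.
End Tsig.

Lemma gal_ext (g h : gal_of (fullv : {vspace LE})) :
  (forall x, g (gE x) = h (gE x)) -> g = h.
Proof.
move=> H; apply/eqP/gal_eqP => a _.
exact: (basis_ext (f := gal_repr g) (g := gal_repr h)).
Qed.

Lemma PhiM (s t : gal_of (fullv : {vspace L0})) : Phi (s * t)%g = (Phi s * Phi t)%g.
Proof.
apply: gal_ext => x.
by rewrite Phi_gE galM ?memvf // galM ?memvf // !Phi_gE.
Qed.

Lemma Phi_inj : injective Phi.
Proof.
move=> s t H; apply/eqP/gal_eqP => a _; apply: (fmorph_inj gE).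
transitivity (Phi s (gE a)); first by rewrite Phi_gE.
by rewrite H Phi_gE.
Qed.

Canonical Phi_morph := @Morphism _ _ ('Gal({:L0}%VS / 1%VS))%g Phi (in2W PhiM).

Lemma Phi_injm : ('injm Phi_morph)%g.
Proof. by apply/injmP => x y _ _; apply: Phi_inj. Qed.

Lemma Phi_img : (Phi_morph @* 'Gal({:L0}%VS / 1%VS))%g = 'Gal({:LE}%VS / 1%VS)%g.
Proof.
have cardL0 : #|'Gal({:L0}%VS / 1%VS)%g| = n0.
  by rewrite -(galois_dim galL0) dimv1 divn1.
apply/eqP; rewrite eqEcard; apply/andP; split.
  by apply/subsetP => y /morphimP [x _ _ ->]; apply: Phi_gal.
rewrite (card_injm Phi_injm) // cardL0.
rewrite (dim_fixedField ('Gal({:LE}%VS / 1%VS))%G) dimLE.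
exact: leq_div.
Qed.

Lemma LE_galois : galois 1%VS {:LE}%VS.
Proof.
have cardG : #|'Gal({:LE}%VS / 1%VS)%g| = n0.
  by rewrite -Phi_img (card_injm Phi_injm) // -(galois_dim galL0) dimv1 divn1.
have n0_gt0 : (0 < n0)%N by rewrite /n0 adim_gt0.
apply/galois_fixedField; apply/eqP.
set F := fixedField _.
have HF := dim_fixedField ('Gal({:LE}%VS / 1%VS))%G.
rewrite cardG dimLE in HF.
have dF : \dim F = 1%N.
  have dpos : (0 < \dim F)%N by rewrite adim_gt0.
  case: (ltngtP (\dim F) 1) => // [|H1].
    by rewrite ltnS leqn0 => /eqP H0; rewrite H0 in dpos.
  by have := ltn_Pdiv H1 n0_gt0; rewrite -HF ltnn.
rewrite eq_sym eqEdim dF dimv1 leqnn andbT.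
by apply/subvP => a /vlineP [k ->]; rewrite rpredZ // mem1v.
Qed.

Lemma LE_isog (G : finGroupType) :
  ('Gal({:L0}%VS / 1%VS) \isog [set: G])%g -> ('Gal({:LE}%VS / 1%VS) \isog [set: G])%g.
Proof.
move=> H; apply: isog_trans H; rewrite isog_sym.
have := sub_isog (subxx _) Phi_injm; rewrite Phi_img; exact.
Qed.

Definition ival (w : LE) : D := vsval w.
Fact ival_add : zmod_morphism ival. Proof. by []. Qed.
HB.instance Definition _ := GRing.isZmodMorphism.Build LE D ival ival_add.
Fact ival_mul : monoid_morphism ival.
Proof. by split => //; rewrite /ival /= algidEA'. Qed.
HB.instance Definition _ := GRing.isMonoidMorphism.Build LE D ival ival_mul.
Fact ival_scale : scalable ival. Proof. by []. Qed.
HB.instance Definition _ := GRing.isScalable.Build M LE D *:%R ival ival_scale.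

Lemma dirB : exists (L : splittingFieldType M) (iota : {lrmorphism L -> D}),
  (forall G : finGroupType, ('Gal({:L0}%VS / 1%VS) \isog [set: G])%g -> is_G_extension L G) /\
  ((\dim {:L}%VS) ^ 2)%N = ((\dim {:L0}%VS) ^ 2)%N.
Proof.
exists LE, ival; split; last by rewrite dimLE.
by move=> G HG; split; [exact: LE_galois | exact: LE_isog].
Qed.
End GalPart.
Unset Implicit Arguments.

Theorem mainTheorem2 (K : fieldType) (M : fieldExtType K) (G : finGroupType) :
  (exists (D0 : falgType K) (L0 : splittingFieldType K)
          (iota0 : {lrmorphism L0 -> D0})
          (D : falgType M) (phi : {rmorphism D0 -> D})
          (L : splittingFieldType M) (iota : {lrmorphism L -> D}),
     is_central_division_alg D0 /\ is_G_extension L0 G /\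
     is_maximal_subfield iota0 /\ is_scalar_extension phi /\
     is_division_alg D /\ is_G_extension L G /\ is_maximal_subfield iota)
  <->
  (exists (D0 : falgType K) (L0 : splittingFieldType K)
          (iota0 : {lrmorphism L0 -> D0})
          (D : falgType M) (phi : {rmorphism D0 -> D}),
     is_central_division_alg D0 /\ is_G_extension L0 G /\
     is_maximal_subfield iota0 /\ is_scalar_extension phi /\
     is_division_alg D /\
         (exists (Omega : fieldExtType K) (s : {lrmorphism L0 -> Omega})
                 (t : {lrmorphism M -> Omega}),
            forall (x : L0) (y : M), s x = t y -> x \in 1%VS) /\
         let E := <<map (fun x => phi (iota0 x)) (vbasis {:L0}%VS)>>%VS in
         [/\ is_aspace E, {in E &, forall u v, u * v = v * u}
           & ((\dim E) ^ 2)%N = \dim {:D}%VS]).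
Proof.
split.
  move=> [D0 [L0 [iota0 [D [phi [L [iota [H1 [H2 [H3 [[phiK phiB] [H5 _]]]]]]]]]]]].
  exists D0, L0, iota0, D, phi; do 5 (split=> //).
  split; first exact: (dirA_inter iota0 phiK phiB H5).
  split; first exact: (E_is_aspace iota0 phiK).
    exact: E_comm.
  by rewrite (dimE iota0 phiK phiB) H3 (dimD phiB).
move=> [D0 [L0 [iota0 [D [phi [H1 [[galL0 HG] [H3 [[phiK phiB] [H5 _]]]]]]]]]].
have [L [iota [HL Hdim]]] := dirB iota0 phiK H5 phiB galL0.
exists D0, L0, iota0, D, phi, L, iota.
do 5 (split; first by []).
split; first exact: HL.
by rewrite /is_maximal_subfield Hdim H3 (dimD phiB).
Qed.
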